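(* Let $(a_i)_{i\ge0}$ be integers with $a_0=0$, $a_1=2$, $a_{2k}=4$ for all $k\geq1$, and $a_{2k+1}$ arbitrary positive integers for $k\ge1$. Let $\ell=[a_0;a_1,a_2,\dots]$ (an irrational number) and $\theta=e^{2/\ell}$. Then $\mathcal A_\theta$ is infinite. In particular, for every positive integer $c$, if $\theta=e^{4-c+\sqrt{c(c+1)}}$ then $\mathcal A_\theta$ is infinite.
   Context: $\lfloor x\rfloor$ is the floor of $x$; $\log$ is the natural logarithm. For real $\theta>1$ and positive integer $n$, $M'_\theta(n)=\left\lfloor 1/(\theta^{1/n}-1)\right\rfloor$, and $\mathcal A_\theta=\{n\in\mathbb N: M'_\theta(n)\neq \lfloor n/\log\theta-1/2\rfloor\}$, where $\mathbb N$ is the set of positive integers. $[a_0;a_1,a_2,\dots]$ denotes an infinite simple continued fraction. *)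

(* Defs.v *)
From Stdlib Require Import Reals ZArith.
Open Scope R_scope.

(* floor x : the greatest integer <= x  (up x is the unique integer with x < up x <= x + 1) *)
Definition floor (x : R) : Z := (up x - 1)%Z.

Fixpoint cf_tail (a : nat -> Z) (k n : nat) : R :=
  match n with
  | O => IZR (a k)
  | S m => IZR (a k) + / cf_tail a (S k) m
  end.

Definition cf_conv (a : nat -> Z) (n : nat) : R := cf_tail a 0 n.

Definition cf_value (a : nat -> Z) (l : R) : Prop := Un_cv (cf_conv a) l.

Definition Mprime (theta : R) (n : nat) : Z :=
  floor (/ (Rpower theta (/ INR n) - 1)).

Definition in_A (theta : R) (n : nat) : Prop :=
  (0 < n)%nat /\ Mprime theta n <> floor (INR n / ln theta - / 2).

Definition A_infinite (theta : R) : Prop :=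
  forall N : nat, exists n : nat, (N < n)%nat /\ in_A theta n.

(* Main.v *)
Require Import Defs.
From Coquelicot Require Import Coquelicot.
From Stdlib Require Import Reals ZArith Lra Lia Psatz.
Open Scope R_scope.

Lemma Dn_exp n y : Derive_n exp n y = exp y.
Proof. exact (is_derive_n_unique _ _ _ _ (is_derive_n_exp n y)). Qed.

Lemma exn_exp k t : ex_derive_n exp k t.
Proof.
  destruct k as [|k]; simpl; [exact I|].
  apply ex_derive_ext with exp.
  - intros y; symmetry; apply Dn_exp.
  - exists (exp t). apply is_derive_Reals. apply derivable_pt_lim_exp.
Qed.

Lemma exp_taylor x : 0 < x -> exp x <= 1 + x + x^2/2 + x^3/6 * exp x.
Proof.
  intros Hx.
  destruct (Taylor_Lagrange exp 2 0 x Hx) as [z [[Hz1 Hz2] Heq]].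
  { intros; apply exn_exp. }
  rewrite (sum_eq _ (fun m => (x-0)^m / INR (Factorial.fact m) * exp 0)) in Heq
    by (intros; rewrite Dn_exp; reflexivity).
  rewrite Dn_exp in Heq.
  simpl sum_f_R0 in Heq. rewrite exp_0 in Heq.
  assert (exp z < exp x) by (apply exp_increasing; lra).
  simpl in Heq. replace (x - 0) with x in Heq by ring.
  assert (0 < x * (x * x)) by (apply Rmult_lt_0_compat; nra).
  rewrite Heq at 1. simpl. field_simplify. nra.
Qed.

Lemma key_ineq x : 0 < x <= /4 -> / x - / 2 + x / 32 <= / (exp x - 1).
Proof.
  intros [H1 H2].
  pose proof (exp_taylor x H1) as T.
  assert (T2 : 1 + x < exp x) by (apply exp_ineq1; lra).
  assert (Hf : exp x * (1 - x^3/6) <= 1 + x + x^2/2) by lra.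
  set (E := exp x) in *.
  apply Rle_trans with ((1 - x^3/6) / (x + x^2/2 + x^3/6)).
  - apply (Rmult_le_reg_r (x * (x + x^2/2 + x^3/6))).
    { apply Rmult_lt_0_compat; nra. }
    field_simplify; [|nra|nra].
    assert (x^3 * (4*x^2 + 76*x - 40) <= 0).
    { assert (0 < x^3) by (apply pow_lt; lra).
      assert (4*x^2 + 76*x - 40 < 0) by nra. nra. }
    lra.
  - assert (0 < 1 - x^3/6) by nra.
    assert (E - 1 <= (x + x^2/2 + x^3/6)/(1 - x^3/6)).
    { apply (Rmult_le_reg_r (1 - x^3/6)); auto. field_simplify; nra. }
    replace ((1 - x^3/6) / (x + x^2/2 + x^3/6)) with (/ ((x + x^2/2 + x^3/6)/(1 - x^3/6)))
      by (field; split; nra).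
    apply Rinv_le_contravar; lra.
Qed.

Record M4 := mk { e11 : Z; e12 : Z; e21 : Z; e22 : Z }.
Definition mmul (A B : M4) : M4 :=
  mk (e11 A * e11 B + e12 A * e21 B)%Z (e11 A * e12 B + e12 A * e22 B)%Z
     (e21 A * e11 B + e22 A * e21 B)%Z (e21 A * e12 B + e22 A * e22 B)%Z.
Definition Ma (a : nat -> Z) k := mk (a k) 1 1 0.
Fixpoint fr (a : nat -> Z) k n := match n with O => Ma a k | S m => mmul (Ma a k) (fr a (S k) m) end.
Fixpoint bk (a : nat -> Z) k n := match n with O => Ma a k | S m => mmul (bk a k m) (Ma a (S (k + m))) end.

Lemma mmul_assoc A B C : mmul A (mmul B C) = mmul (mmul A B) C.
Proof. destruct A, B, C; unfold mmul; simpl; f_equal; ring. Qed.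

Lemma bk_step a k n : mmul (Ma a k) (bk a (S k) n) = bk a k (S n).
Proof.
  induction n as [|n IH].
  - simpl. rewrite Nat.add_0_r. reflexivity.
  - change (bk a (S k) (S n)) with (mmul (bk a (S k) n) (Ma a (S (S k + n)))).
    rewrite mmul_assoc, IH. simpl. do 3 f_equal. lia.
Qed.

Lemma fr_bk a k n : fr a k n = bk a k n.
Proof.
  revert k; induction n as [|n IH]; intros k; [reflexivity|].
  simpl fr. rewrite IH. apply bk_step.
Qed.

Definition Hpos (a : nat -> Z) := forall j, (1 <= j)%nat -> (1 <= a j)%Z.

Lemma fr_pos a k n : Hpos a -> (1 <= k)%nat ->
  (1 <= e11 (fr a k n))%Z /\ (1 <= e21 (fr a k n))%Z /\ (0 <= e12 (fr a k n))%Z /\ (0 <= e22 (fr a k n))%Z.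
Proof.
  intros Hp. revert k; induction n as [|n IH]; intros k Hk.
  - cbn [fr]; unfold Ma; cbn [e11 e12 e21 e22]. specialize (Hp k Hk). lia.
  - cbn [fr]. destruct (IH (S k)) as [A [B [C D]]]; [lia|]. specialize (Hp k Hk). unfold mmul, Ma; cbn [e11 e12 e21 e22]. nia.
Qed.

Lemma cf_tail_fr a k n : Hpos a ->
  cf_tail a k n = IZR (e11 (fr a k n)) / IZR (e21 (fr a k n)).
Proof.
  intros Hp. revert k; induction n as [|n IH]; intros k.
  - simpl. field.
  - simpl cf_tail. rewrite IH. simpl fr.
    destruct (fr_pos a (S k) n Hp ltac:(lia)) as [A [B _]].
    destruct (fr a (S k) n) as [x y z w]; unfold mmul, Ma; cbn [e11 e12 e21 e22] in *.
    rewrite !plus_IZR, !mult_IZR.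
    apply IZR_le in A. apply IZR_le in B.
    field. lra.
Qed.

Definition pn a n := e11 (bk a 0 n).
Definition qn a n := e21 (bk a 0 n).

Lemma conv_pq a n : Hpos a -> cf_conv a n = IZR (pn a n) / IZR (qn a n).
Proof. intros Hp. unfold cf_conv, pn, qn. rewrite cf_tail_fr, fr_bk; auto. Qed.

Lemma e12_S a n : e12 (bk a 0 (S n)) = pn a n.
Proof. unfold pn. simpl. ring. Qed.
Lemma e22_S a n : e22 (bk a 0 (S n)) = qn a n.
Proof. unfold qn. simpl. ring. Qed.

Lemma p_rec a n : pn a (S (S n)) = (a (S (S n)) * pn a (S n) + pn a n)%Z.
Proof. unfold pn at 1. change (bk a 0 (S (S n))) with (mmul (bk a 0 (S n)) (Ma a (S (S n)))).
  cbn [mmul e11 e12 e21 e22 Ma]. rewrite e12_S. fold (pn a (S n)). ring. Qed.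
Lemma q_rec a n : qn a (S (S n)) = (a (S (S n)) * qn a (S n) + qn a n)%Z.
Proof. unfold qn at 1. change (bk a 0 (S (S n))) with (mmul (bk a 0 (S n)) (Ma a (S (S n)))).
  cbn [mmul e11 e12 e21 e22 Ma]. rewrite e22_S. fold (qn a (S n)). ring. Qed.
Lemma p0 a : pn a 0 = a 0%nat. Proof. reflexivity. Qed.
Lemma p1 a : pn a 1 = (a 0%nat * a 1%nat + 1)%Z. Proof. unfold pn; cbn [bk mmul Ma e11 e12 e21 e22 Nat.add]. ring. Qed.
Lemma q0 a : qn a 0 = 1%Z. Proof. reflexivity. Qed.
Lemma q1 a : qn a 1 = a 1%nat. Proof. unfold qn; cbn [bk mmul Ma e11 e12 e21 e22 Nat.add]. ring. Qed.

Definition En a n := (pn a (S n) * qn a n - pn a n * qn a (S n))%Z.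

Lemma En_S a n : En a (S n) = (- En a n)%Z.
Proof. unfold En. rewrite p_rec, q_rec. ring. Qed.

Lemma En_even a j : En a (2 * j) = 1%Z /\ En a (S (2 * j)) = (-1)%Z.
Proof.
  induction j as [|j IH].
  - assert (E0 : En a 0 = 1%Z) by (unfold En; rewrite p1, q1, p0, q0; ring). simpl. rewrite En_S, E0. split; reflexivity.
  - replace (2 * S j)%nat with (S (S (2 * j))) by lia.
    rewrite !En_S. destruct IH as [A B]. rewrite A. split; reflexivity.
Qed.

Lemma En_pm a n : En a n = 1%Z \/ En a n = (-1)%Z.
Proof.
  induction n as [|n IH].
  - left; apply (En_even a 0).
  - rewrite En_S. lia.
Qed.

Lemma q_grow a n : Hpos a ->
  (Z.of_nat n + 1 <= qn a (S n))%Z /\ (1 <= qn a n)%Z /\ (qn a n <= qn a (S n))%Z.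
Proof.
  intros Hp. induction n as [|n IH].
  - rewrite q0, q1. specialize (Hp 1%nat ltac:(lia)). lia.
  - destruct IH as [A [B C]]. rewrite q_rec. specialize (Hp (S (S n)) ltac:(lia)). nia.
Qed.
Definition cc a n := IZR (pn a n) / IZR (qn a n).

Lemma q_ge1 a n : Hpos a -> 1 <= IZR (qn a n).
Proof. intros Hp. apply IZR_le. apply (q_grow a n Hp). Qed.

Lemma q_strict a n : Hpos a -> (qn a n < qn a (S (S n)))%Z.
Proof.
  intros Hp. destruct (q_grow a n Hp) as [_ [A B]]. destruct (q_grow a (S n) Hp) as [_ [C _]].
  rewrite q_rec. specialize (Hp (S (S n)) ltac:(lia)). nia.
Qed.

Lemma cc_diff a n : Hpos a ->
  cc a (S n) - cc a n = IZR (En a n) / (IZR (qn a n) * IZR (qn a (S n))).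
Proof.
  intros Hp. unfold cc, En. pose proof (q_ge1 a n Hp). pose proof (q_ge1 a (S n) Hp).
  rewrite minus_IZR, !mult_IZR. field. lra.
Qed.

Lemma u_dec a j : Hpos a -> cc a (2 * S j + 1) < cc a (2 * j + 1).
Proof.
  intros Hp.
  replace (2 * S j + 1)%nat with (S (S (2 * j + 1))) by lia.
  pose proof (cc_diff a (S (2*j+1)) Hp). pose proof (cc_diff a (2*j+1) Hp).
  destruct (En_even a (S j)) as [E1 _]. destruct (En_even a j) as [_ E2].
  replace (2 * S j)%nat with (S (2 * j + 1)) in E1 by lia.
  replace (S (2 * j)) with (2 * j + 1)%nat in E2 by lia.
  rewrite E1 in H. rewrite E2 in H0.
  pose proof (q_ge1 a (2*j+1) Hp). pose proof (q_ge1 a (S (2*j+1)) Hp).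
  pose proof (q_ge1 a (S (S (2*j+1))) Hp).
  pose proof (IZR_lt _ _ (q_strict a (2*j+1) Hp)).
  set (A := IZR (qn a (2*j+1))) in *. set (B := IZR (qn a (S (2*j+1)))) in *.
  set (C := IZR (qn a (S (S (2*j+1))))) in *.
  assert (1 / (B * C) < 1 / (A * B)).
  { apply Rmult_lt_reg_r with (A * B * C). { repeat apply Rmult_lt_0_compat; lra. }
    field_simplify; [lra|lra|lra]. }
  assert (cc a (S (S (2 * j + 1))) - cc a (2 * j + 1) = 1 / (B * C) - 1/(A*B)).
  { rewrite <- (Rplus_0_r (1/(B*C))). replace (1/(B*C) + 0 - 1/(A*B)) with
      (1/(B*C) + -1/(A*B)) by (field; lra). lra. }
  lra.
Qed.

Lemma v_inc a j : Hpos a -> cc a (2 * j + 2) < cc a (2 * S j + 2).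
Proof.
  intros Hp.
  replace (2 * S j + 2)%nat with (S (S (2 * j + 2))) by lia.
  pose proof (cc_diff a (S (2*j+2)) Hp). pose proof (cc_diff a (2*j+2) Hp).
  destruct (En_even a (S j)) as [_ E1]. destruct (En_even a (S j)) as [E2 _].
  replace (S (2 * S j)) with (S (2 * j + 2)) in E1 by lia.
  replace (2 * S j)%nat with (2 * j + 2)%nat in E2 by lia.
  rewrite E1 in H. rewrite E2 in H0.
  pose proof (q_ge1 a (2*j+2) Hp). pose proof (q_ge1 a (S (2*j+2)) Hp).
  pose proof (q_ge1 a (S (S (2*j+2))) Hp).
  pose proof (IZR_lt _ _ (q_strict a (2*j+2) Hp)).
  set (A := IZR (qn a (2*j+2))) in *. set (B := IZR (qn a (S (2*j+2)))) in *.
  set (C := IZR (qn a (S (S (2*j+2))))) in *.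
  assert (1 / (B * C) < 1 / (A * B)).
  { apply Rmult_lt_reg_r with (A * B * C). { repeat apply Rmult_lt_0_compat; lra. }
    field_simplify; [lra|lra|lra]. }
  assert (cc a (S (S (2 * j + 2))) - cc a (2 * j + 2) = - (1 / (B * C)) + 1/(A*B)).
  { replace (IZR (-1) / (B * C)) with (- (1/(B*C))) in H by (simpl; field; lra).
    replace (IZR 1 / (A * B)) with (1/(A*B)) in H0 by (simpl; field; lra). lra. }
  lra.
Qed.

Lemma uv_gap a j : Hpos a ->
  cc a (2 * j + 1) - cc a (2 * j + 2) = 1 / (IZR (qn a (2*j+1)) * IZR (qn a (2*j+2))).
Proof.
  intros Hp. pose proof (cc_diff a (2*j+1) Hp).
  destruct (En_even a j) as [_ E2]. replace (S (2 * j)) with (2 * j + 1)%nat in E2 by lia.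
  rewrite E2 in H. replace (S (2*j+1)) with (2*j+2)%nat in H by lia.
  pose proof (q_ge1 a (2*j+1) Hp). pose proof (q_ge1 a (2*j+2) Hp).
  set (A := IZR (qn a (2*j+1))) in *. set (B := IZR (qn a (2*j+2))) in *.
  assert (IZR (-1) / (A * B) = - (1 / (A * B))) by (unfold Rdiv; replace (IZR (-1)) with (-1) by reflexivity; lra).
  lra.
Qed.

Lemma lim_dec (c : nat -> R) l (f : nat -> nat) : Un_cv c l ->
  (forall j, c (f (S j)) < c (f j)) -> (forall j, (j <= f j)%nat) -> forall j, l <= c (f j).
Proof.
  intros Hc Hd Hf j. destruct (Rle_or_lt l (c (f j))) as [H|H]; [exact H|exfalso].
  assert (Hm : forall m, c (f (m + j)%nat) <= c (f j)).
  { induction m as [|m IH]; [simpl; lra|]. simpl. specialize (Hd (m + j)%nat). lra. }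
  destruct (Hc (l - c (f j)) ltac:(lra)) as [N HN].
  specialize (HN (f (N + j)%nat) ltac:(specialize (Hf (N+j)%nat); lia)).
  specialize (Hm N). unfold R_dist in HN. apply Rabs_def2 in HN. lra.
Qed.

Lemma lim_inc (c : nat -> R) l (f : nat -> nat) : Un_cv c l ->
  (forall j, c (f j) < c (f (S j))) -> (forall j, (j <= f j)%nat) -> forall j, c (f j) <= l.
Proof.
  intros Hc Hd Hf j. destruct (Rle_or_lt (c (f j)) l) as [H|H]; [exact H|exfalso].
  assert (Hm : forall m, c (f j) <= c (f (m + j)%nat)).
  { induction m as [|m IH]; [simpl; lra|]. simpl. specialize (Hd (m + j)%nat). lra. }
  destruct (Hc (c (f j) - l) ltac:(lra)) as [N HN].
  specialize (HN (f (N + j)%nat) ltac:(specialize (Hf (N+j)%nat); lia)).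
  specialize (Hm N). unfold R_dist in HN. apply Rabs_def2 in HN. lra.
Qed.

Lemma cv_bounds a l : Hpos a -> cf_value a l -> forall j,
  l < cc a (2*j+1) /\ cc a (2*j+2) <= l.
Proof.
  intros Hp Hl j.
  assert (Hc : Un_cv (cc a) l).
  { intros e He. destruct (Hl e He) as [N HN]. exists N. intros n Hn.
    unfold cc. rewrite <- conv_pq; auto. }
  split.
  - apply Rle_lt_trans with (cc a (2 * S j + 1)).
    + apply (lim_dec (cc a) l (fun j => 2 * j + 1)%nat Hc (fun j => u_dec a j Hp) ltac:(intros ?; cbv beta; lia)).
    + apply u_dec; auto.
  - apply (lim_inc (cc a) l (fun j => 2 * j + 2)%nat Hc (fun j => v_inc a j Hp) ltac:(intros ?; cbv beta; lia)).
Qed.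

Lemma floor_eq x z : IZR z <= x < IZR z + 1 -> Defs.floor x = z.
Proof.
  intros [H1 H2]. unfold Defs.floor. rewrite <- (tech_up x (z+1)); [ring| |];
  rewrite plus_IZR; simpl; lra.
Qed.

Lemma floor_ge x z : IZR z <= x -> (z <= Defs.floor x)%Z.
Proof.
  intros H. unfold Defs.floor. destruct (archimed x) as [A _].
  assert (IZR z < IZR (up x)) by lra. apply lt_IZR in H0. lia.
Qed.

Lemma part1 (a : nat -> Z) (l : R) :
      a 0%nat = 0%Z ->
      a 1%nat = 2%Z ->
      (forall k : nat, (1 <= k)%nat -> a (2 * k)%nat = 4%Z) ->
      (forall k : nat, (1 <= k)%nat -> (0 < a (2 * k + 1)%nat)%Z) ->
      cf_value a l ->
      A_infinite (exp (2 / l)).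
Proof.
  intros Ha0 Ha1 Hev Hod Hl.
  assert (Hp : Hpos a).
  { intros i Hi. destruct (Nat.Even_or_Odd i) as [[k Hk]|[k Hk]]; subst i.
    - rewrite Hev by lia. lia.
    - destruct k as [|k]. + simpl. rewrite Ha1. lia. + specialize (Hod (S k) ltac:(lia)). lia. }
  assert (Ha2 : a 2%nat = 4%Z) by apply (Hev 1%nat ltac:(lia)).
  assert (Hpar : forall j, (exists m, pn a (2*j+1) = 2*m+1)%Z /\ (exists m, pn a (2*j+2) = 2*m)%Z).
  { induction j as [|j [[m Hm] [m' Hm']]].
    - split; [exists 0%Z | exists 2%Z]; simpl.
      + rewrite p1, Ha0. ring.
      + rewrite p_rec, p1, p0, Ha0, Ha1, Ha2. ring.
    - split.
      + exists (a (2 * S j + 1)%nat * m' + m)%Z.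
        replace (2 * S j + 1)%nat with (S (S (2 * j + 1))) by lia. rewrite p_rec.
        replace (S (2*j+1)) with (2*j+2)%nat by lia. rewrite Hm, Hm'.
        replace (S (S (2 * j + 1))) with (2 * S j + 1)%nat by lia. ring.
      + exists (4 * (a (2 * S j + 1)%nat * m' + m) + 2 + m')%Z.
        replace (2 * S j + 2)%nat with (S (S (2 * j + 2))) by lia. rewrite p_rec.
        replace (S (S (2 * j + 2))) with (2 * (j + 2))%nat by lia. rewrite Hev by lia.
        replace (S (2*j+2)) with (S (S (2*j+1))) by lia. rewrite p_rec.
        replace (S (S (2 * j + 1))) with (2 * S j + 1)%nat by lia.
        replace (S (2*j+1)) with (2*j+2)%nat by lia. rewrite Hm, Hm'. ring. }
  assert (Hq : forall j, qn a (2*j+2) = (4 * qn a (2*j+1) + qn a (2*j))%Z).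
  { intros j. replace (2*j+2)%nat with (S (S (2*j))) by lia. rewrite q_rec.
    replace (S (S (2 * j))) with (2 * (S j))%nat by lia. rewrite Hev by lia.
    replace (S (2*j)) with (2*j+1)%nat by lia. ring. }
  destruct (cv_bounds a l Hp Hl 0) as [Lu Lv].
  assert (Hc1 : cc a 1 = /2).
  { unfold cc. rewrite p1, q1, Ha0, Ha1. simpl. field. }
  assert (Hc2 : cc a 2 = 4/9).
  { unfold cc. replace 2%nat with (S (S 0)) by reflexivity. rewrite p_rec, q_rec, p1, q1, p0, q0, Ha0, Ha1, Ha2. simpl. field. }
  simpl in Lu, Lv. rewrite Hc1 in Lu. rewrite Hc2 in Lv.
  intros N.
  set (j := (N + 18)%nat).
  destruct (cv_bounds a l Hp Hl j) as [Bu Bv].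
  pose proof (uv_gap a j Hp) as Gap.
  destruct (Hpar j) as [[m Hm] _].
  pose proof (Hq j) as Hqj.
  destruct (q_grow a (2*j) Hp) as [Qb [Q0 _]].
  replace (S (2*j)) with (2*j+1)%nat in Qb by lia.
  set (P := pn a (2*j+1)) in *. set (Q := qn a (2*j+1)) in *.
  set (Q1 := qn a (2*j+2)) in *.
  unfold cc in Bu, Bv, Gap. fold P Q Q1 in Bu, Bv, Gap.
  assert (HQ : (Z.of_nat N + 37 <= Q)%Z) by (unfold j in Qb; lia).
  exists (Z.to_nat Q). split; [lia|].
  assert (HnR : INR (Z.to_nat Q) = IZR Q).
  { rewrite INR_IZR_INZ, Z2Nat.id; [reflexivity|lia]. }
  split; [lia|].
  unfold Mprime, Rpower. rewrite ln_exp, HnR.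
  assert (QR : 37 <= IZR Q) by (apply IZR_le in HQ; rewrite plus_IZR, <- INR_IZR_INZ in HQ; pose proof (pos_INR N); simpl in HQ; lra).
  assert (Q1R : 4 * IZR Q + 1 <= IZR Q1). { rewrite Hqj. rewrite plus_IZR, mult_IZR. apply IZR_le in Q0. simpl IZR in *. lra. }
  assert (Hl0 : 0 < l) by lra.
  set (d := IZR P - IZR Q * l).
  assert (Hd1 : 0 < d).
  { unfold d. apply Rmult_lt_compat_r with (r := IZR Q) in Bu; [|lra].
    unfold Rdiv in Bu. rewrite Rmult_assoc, Rinv_l in Bu; lra. }
  assert (Hd2 : d <= 1 / IZR Q1).
  { unfold d. assert (IZR P / IZR Q - l <= 1 / (IZR Q * IZR Q1)) by lra.
    apply Rmult_le_compat_l with (r := IZR Q) in H; [|lra].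
    replace (IZR Q * (IZR P / IZR Q - l)) with (IZR P - IZR Q * l) in H by (field; lra).
    replace (IZR Q * (1 / (IZR Q * IZR Q1))) with (1 / IZR Q1) in H by (field; lra). exact H. }
  assert (Hd3 : d * (4 * IZR Q) <= 1).
  { apply Rle_trans with (1 / IZR Q1 * IZR Q1).
    - apply Rmult_le_compat; lra.
    - right. field. lra. }
  set (x := / IZR Q * (2 / l)).
  assert (Hx : 0 < x <= /4).
  { unfold x. split.
    - apply Rmult_lt_0_compat; [apply Rinv_0_lt_compat; lra|]. unfold Rdiv; apply Rmult_lt_0_compat; [lra|apply Rinv_0_lt_compat; lra].
    - replace (/ IZR Q * (2 / l)) with (/ (IZR Q * l / 2)) by (field; lra).
      apply Rinv_le_contravar; nra. }
  pose proof (key_ineq x Hx) as K.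
  assert (Hm' : IZR P = 2 * IZR m + 1) by (rewrite Hm, plus_IZR, mult_IZR; reflexivity).
  assert (F1 : Defs.floor (IZR Q / (2 / l) - / 2) = (m - 1)%Z).
  { apply floor_eq. rewrite minus_IZR.
    replace (IZR Q / (2 / l) - /2) with (IZR m - d / 2) by (unfold d; rewrite Hm'; field; lra).
    split; [|simpl; lra].
    assert (d <= 1). { apply Rle_trans with (d * (4 * IZR Q)); [|lra]. nra. }
    simpl; lra. }
  assert (F2 : (m <= Defs.floor (/ (exp x - 1)))%Z).
  { apply floor_ge. eapply Rle_trans; [|exact K].
    replace (/ x) with (IZR Q * l / 2) by (unfold x; field; lra).
    assert (IZR Q * l = IZR P - d) by (unfold d; ring).
    assert (d / 2 <= x / 32).
    { unfold x. replace (/ IZR Q * (2 / l) / 32) with (/ (16 * l * IZR Q)) by (field; lra).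
      apply Rmult_le_reg_r with (16 * l * IZR Q). { repeat apply Rmult_lt_0_compat; lra. }
      rewrite Rinv_l by (apply Rgt_not_eq; repeat apply Rmult_lt_0_compat; lra).
      nra. }
    lra. }
  rewrite F1. lia.
Qed.

Lemma tail_cv (b : nat -> Z) (t : nat -> R) (l : R) : Hpos b ->
  (forall n, (1 <= n)%nat -> 0 < t n) ->
  (forall n, (1 <= n)%nat -> t n = IZR (b n) + / t (S n)) ->
  l = IZR (b 0%nat) + / t 1%nat -> cf_value b l.
Proof.
  intros Hp Ht Hrec Hl.
  assert (T : forall n, l = (IZR (pn b (S n)) * t (S (S n)) + IZR (pn b n)) /
                          (IZR (qn b (S n)) * t (S (S n)) + IZR (qn b n))).
  { induction n as [|n IH].
    - rewrite Hl, p1, q1, p0, q0. rewrite (Hrec 1%nat) by lia.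
      pose proof (Ht 2%nat ltac:(lia)). pose proof (Hp 1%nat ltac:(lia)) as B1.
      apply IZR_le in B1.
      rewrite plus_IZR, mult_IZR. field.
      assert (0 < IZR (b 1%nat) * t 2%nat) by (apply Rmult_lt_0_compat; lra).
      split; lra.
    - rewrite IH. rewrite (Hrec (S (S n))) by lia. rewrite p_rec, q_rec.
      pose proof (Ht (S (S (S n))) ltac:(lia)).
      pose proof (Hp (S (S n)) ltac:(lia)) as B. apply IZR_le in B.
      pose proof (q_ge1 b n Hp). pose proof (q_ge1 b (S n) Hp).
      rewrite !plus_IZR, !mult_IZR.
      set (u := t (S (S (S n)))) in *.
      assert (0 < / u) by (apply Rinv_0_lt_compat; lra).
      assert (0 < IZR (b (S (S n))) + / u) by lra.
      assert (0 < IZR (qn b (S n)) * (IZR (b (S (S n))) + / u)) by (apply Rmult_lt_0_compat; lra).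
      assert (0 < IZR (b (S (S n))) * IZR (qn b (S n))) by (apply Rmult_lt_0_compat; lra).
      assert (0 < (IZR (b (S (S n))) * IZR (qn b (S n)) + IZR (qn b n)) * u) by (apply Rmult_lt_0_compat; lra).
      field. lra. }
  assert (Bd : forall n, Rabs (cf_conv b (S n) - l) <= / IZR (qn b (S n))).
  { intros n. rewrite conv_pq by auto. rewrite (T n).
    pose proof (q_ge1 b n Hp). pose proof (q_ge1 b (S n) Hp).
    pose proof (Ht (S (S n)) ltac:(lia)).
    set (u := t (S (S n))) in *.
    assert (0 < IZR (qn b (S n)) * u) by (apply Rmult_lt_0_compat; lra).
    replace (IZR (pn b (S n)) / IZR (qn b (S n)) -
      (IZR (pn b (S n)) * u + IZR (pn b n)) / (IZR (qn b (S n)) * u + IZR (qn b n)))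
      with (IZR (En b n) / (IZR (qn b (S n)) * (IZR (qn b (S n)) * u + IZR (qn b n))))
      by (unfold En; rewrite minus_IZR, !mult_IZR; field; lra).
    unfold Rdiv. rewrite Rabs_mult.
    assert (Rabs (IZR (En b n)) = 1).
    { destruct (En_pm b n) as [E|E]; rewrite E, Rabs_Zabs; reflexivity. }
    rewrite H3, Rmult_1_l. rewrite Rabs_right.
    2:{ apply Rle_ge, Rlt_le, Rinv_0_lt_compat. apply Rmult_lt_0_compat; lra. }
    apply Rinv_le_contravar; [lra|]. nra. }
  intros eps He.
  destruct (archimed (/ eps)) as [A1 _].
  assert (0 < / eps) by (apply Rinv_0_lt_compat; lra).
  exists (S (Z.to_nat (up (/ eps)))). intros n Hn.
  destruct n as [|m]; [lia|].
  unfold R_dist. eapply Rle_lt_trans; [apply Bd|].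
  destruct (q_grow b m Hp) as [G _]. apply IZR_le in G. rewrite plus_IZR, <- INR_IZR_INZ in G.
  assert (INR (Z.to_nat (up (/ eps))) <= INR m) by (apply le_INR; lia).
  rewrite INR_IZR_INZ, Z2Nat.id in H0.
  2:{ apply le_IZR. simpl. lra. }
  pose proof (pos_INR m).
  apply Rle_lt_trans with (/ (INR m + 1)).
  - apply Rinv_le_contravar; [lra|]. simpl in G; lra.
  - rewrite <- (Rinv_inv eps). apply Rinv_lt_contravar; [apply Rmult_lt_0_compat; lra|]. lra.
Qed.

Definition bseq (c : nat) (n : nat) : Z :=
  match n with O => 0%Z | 1%nat => 2%Z | _ => if Nat.even n then 4%Z else Z.of_nat c end.
Definition tseq (C tau : R) (n : nat) : R :=
  match n with 1%nat => 2 + tau | _ => if Nat.even n then / tau else C + tau end.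

Lemma bdef c n : (2 <= n)%nat -> bseq c n = if Nat.even n then 4%Z else Z.of_nat c.
Proof. intros H. destruct n as [|[|n]]; [lia|lia|reflexivity]. Qed.
Lemma tdef C tau n : (2 <= n)%nat -> tseq C tau n = if Nat.even n then / tau else C + tau.
Proof. intros H. destruct n as [|[|n]]; [lia|lia|reflexivity]. Qed.

Lemma even2k k : Nat.even (2 * k) = true.
Proof. rewrite Nat.even_mul. reflexivity. Qed.
Lemma odd2k k : Nat.even (2 * k + 1) = false.
Proof. rewrite Nat.even_add, Nat.even_mul. reflexivity. Qed.

Lemma part2 (c : nat) : (1 <= c)%nat ->
  A_infinite (exp (4 - INR c + sqrt (INR c * (INR c + 1)))).
Proof.
  intros Hc.
  set (C := INR c).
  assert (HC : 1 <= C) by (unfold C; apply (le_INR 1 c) in Hc; simpl in Hc; lra).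
  set (s := sqrt (C * (C + 1))).
  assert (Hs2 : s * s = C * (C + 1)) by (unfold s; apply sqrt_sqrt; nra).
  assert (Hs0 : 0 <= s) by (unfold s; apply sqrt_pos).
  assert (HsC : C < s) by nra.
  set (tau := (s - C) / 2).
  assert (Ht0 : 0 < tau) by (unfold tau; lra).
  assert (Hid : tau * tau + C * tau = C / 4) by (unfold tau; nra).
  assert (Ht4 : tau < / 4) by nra.
  set (l := / (2 + tau)).
  assert (Hbp : Hpos (bseq c)).
  { intros j Hj. destruct j as [|[|j]]; [lia|simpl; lia|].
    rewrite bdef by lia. destruct (Nat.even (S (S j))); lia. }
  assert (Hcv : cf_value (bseq c) l).
  { apply tail_cv with (t := tseq C tau); auto.
    - intros n Hn. destruct n as [|[|n]]; [lia|simpl; lra|].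
      rewrite tdef by lia. destruct (Nat.even (S (S n))).
      + apply Rinv_0_lt_compat; lra.
      + lra.
    - intros n Hn. destruct n as [|[|n]]; [lia| |].
      + simpl. rewrite Rinv_inv. reflexivity.
      + rewrite tdef, bdef, tdef by lia.
        assert (Hs : Nat.even (S (S (S n))) = negb (Nat.even (S (S n))))
          by (rewrite Nat.even_succ, <- Nat.negb_even; reflexivity).
        rewrite Hs. destruct (Nat.even (S (S n))); simpl negb; cbv iota.
        * assert (0 < C + tau) by lra.
          apply (Rmult_eq_reg_l (tau * (C + tau))); [|nra].
          simpl IZR. field_simplify; [|lra|lra]. nra.
        * rewrite Rinv_inv. unfold C. rewrite INR_IZR_INZ. reflexivity.
    - simpl. unfold l. ring. }
  pose proof (part1 (bseq c) l eq_refl eq_refl) as P1.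
  replace (2 / l) with (4 - INR c + sqrt (INR c * (INR c + 1))) in P1.
  2:{ unfold l. fold C s. unfold tau. field. lra. }
  apply P1; auto.
  - intros k Hk. rewrite bdef by lia. rewrite even2k. reflexivity.
  - intros k Hk. rewrite bdef by lia. rewrite odd2k. lia.
Qed.

Theorem theorem6 :
  (forall (a : nat -> Z) (l : R),
      a 0%nat = 0%Z ->
      a 1%nat = 2%Z ->
      (forall k : nat, (1 <= k)%nat -> a (2 * k)%nat = 4%Z) ->
      (forall k : nat, (1 <= k)%nat -> (0 < a (2 * k + 1)%nat)%Z) ->
      cf_value a l ->
      A_infinite (exp (2 / l)))
  /\
  (forall c : nat, (1 <= c)%nat ->
      A_infinite (exp (4 - INR c + sqrt (INR c * (INR c + 1))))).
Proof. split; [exact part1 | exact part2]. Qed.
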